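(* Let $A$ be a Banach algebra and let $J$ be a right ideal in $A$ which is dense in $A$ for the norm topology. Then $J$ is quasi-directly finite if and only if $A$ is quasi-directly finite.
   Context: For $a,b$ in a ring $R$ (not necessarily unital), $a\diamond b := a+b-ab$; if $a\diamond b=0$ then $a$ is a left quasi-inverse of $b$ and $b$ a right quasi-inverse of $a$. A ring $R$ is quasi-directly finite if every element having a left quasi-inverse in $R$ also has a right quasi-inverse in $R$ (equivalently, $a\diamond b=0$ implies $b\diamond a=0$ for all $a,b\in R$). Here $J$ is regarded as a ring with the operations inherited from $A$. *)

(* Defs.v *)
From HB Require Import structures.
From mathcomp Require Import all_boot all_order all_algebra.
From mathcomp Require Import all_classical all_reals all_analysis.
Set Implicit Arguments. Unset Strict Implicit. Unset Printing Implicit Defensive.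
Import Order.TTheory GRing.Theory Num.Theory.
Import numFieldNormedType.Exports.
Local Open Scope classical_set_scope.
Local Open Scope ring_scope.

Record banach_algebra_mul (R : realType) (V : completeNormedModType R)
    (mul : V -> V -> V) : Prop := BanachAlgebraMul {
  ba_mulA : forall x y z, mul x (mul y z) = mul (mul x y) z;
  ba_mulDl : forall x y z, mul (x + y) z = mul x z + mul y z;
  ba_mulDr : forall x y z, mul x (y + z) = mul x y + mul x z;
  ba_mulZl : forall (k : R) x y, mul (k *: x) y = k *: mul x y;
  ba_mulZr : forall (k : R) x y, mul x (k *: y) = k *: mul x y;
  ba_normM : forall x y, `|mul x y| <= `|x| * `|y|
}.

Definition qdiamond (V : zmodType) (mul : V -> V -> V) (a b : V) : V :=
  a + b - mul a b.

Definition right_ideal (R : realType) (V : lmodType R) (mul : V -> V -> V)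
    (J : set V) : Prop :=
  [/\ J 0,
      forall x y, J x -> J y -> J (x + y),
      forall (k : R) x, J x -> J (k *: x)
    & forall x a, J x -> J (mul x a)].

Definition quasi_directly_finite (V : zmodType) (mul : V -> V -> V)
    (S : set V) : Prop :=
  forall a b, S a -> S b -> qdiamond mul a b = 0 -> qdiamond mul b a = 0.

(* Main.v *)
Require Import Defs.
From HB Require Import structures.
From mathcomp Require Import all_boot all_order all_algebra.
From mathcomp Require Import all_classical all_reals all_analysis.
Import Order.TTheory GRing.Theory Num.Theory.
Import numFieldNormedType.Exports.
Local Open Scope classical_set_scope.
Local Open Scope ring_scope.

Section S.
Context (R : realType) (V : completeNormedModType R) (mul : V -> V -> V)
  (HB : banach_algebra_mul mul).

Lemma mulBr x y z : mul x (y - z) = mul x y - mul x z.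
Proof.
have h : forall w, mul x (- w) = - mul x w.
  by move=> w; rewrite -scaleN1r (ba_mulZr HB) scaleN1r.
by rewrite (ba_mulDr HB) h.
Qed.

Lemma qinv_small r : `|r| < 1 -> exists x, r + x - mul r x = 0.
Proof.
move=> r1.
pose T := fun x => mul r x - r.
pose f := @mkfun V V setT setT T (fun _ _ => I).
have ctr : is_contraction f.
  exists (`|r|%:nng); split => //.
  move=> [x y] _ /=; rewrite /f /mkfun /T.
  idtac.
rewrite opprD opprK addrACA addNr addr0 -mulBr.
  exact: (ba_normM HB).
have [p _ Hp] := banach_fixed_point ctr closedT (ex_intro _ 0 I).
exists p; rewrite {1}Hp /f /mkfun /T addrCA subrr addr0 subrr.
done.
Qed.

Lemma mulBl x y z : mul (x - y) z = mul x z - mul y z.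
Proof.
have h : forall w, mul (- w) z = - mul w z.
  by move=> w; rewrite -scaleN1r (ba_mulZl HB) scaleN1r.
by rewrite (ba_mulDl HB) h.
Qed.

Lemma mul0x x : mul 0 x = 0.
Proof. by move: (mulBl x x x); rewrite !subrr. Qed.
Lemma mulx0 x : mul x 0 = 0.
Proof. by move: (mulBr x x x); rewrite !subrr. Qed.

Notation d := (qdiamond mul).

Lemma dx0 x : d x 0 = x.
Proof. by rewrite /qdiamond mulx0 addr0 subr0. Qed.
Lemma d0x x : d 0 x = x.
Proof. by rewrite /qdiamond mul0x add0r subr0. Qed.


Lemma dA x y z : d (d x y) z = d x (d y z).
Proof.
rewrite /qdiamond mulBl !(ba_mulDl HB) mulBr !(ba_mulDr HB) (ba_mulA HB).
move: (mul x y) (mul x z) (mul y z) (mul (mul x y) z) => A B C D.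
rewrite !opprD !opprK !addrA.
rewrite [x + y - A + z]addrAC.
congr (_ + D); rewrite [x + y + z - C - A]addrAC [in RHS]addrAC.
done.
Qed.

Lemma d_sub_small a b j : d a b = 0 -> d j b = (j - a) - mul (j - a) b.
Proof.
move=> h; rewrite -[d j b]subr0 -h /qdiamond mulBl.
rewrite !opprD !opprK.
move: (mul j b) (mul a b) => M N.
rewrite !addrA; congr (_ + N).
rewrite [j + b - M - a - b]addrAC [j + b - M - b]addrAC addrK.
by rewrite addrAC.
Qed.

End S.

Theorem proposition2p8 (R : realType) (V : completeNormedModType R)
    (mul : V -> V -> V) (J : set V) :
  banach_algebra_mul mul ->
  right_ideal mul J ->
  closure J = setT ->
  (quasi_directly_finite mul J <-> quasi_directly_finite mul setT).
Proof.
move=> HB [J0 JD JZ JM] Jd; split; last first.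
  by move=> H a b _ _; apply: H.
move=> HJ a b _ _ hab.
have dA' := @dA R V mul HB.
have dx0' := @dx0 R V mul HB.
have d0x' := @d0x R V mul HB.
pose e := (1 + `|b|)^-1.
have e0 : 0 < e by rewrite invr_gt0 ltr_wpDr.
have : closure J a by rewrite Jd.
move=> /(_ _ (nbhsx_ballx a e e0)) [j [Jj]].
rewrite -ball_normE /= => ja.
set r := qdiamond mul j b.
have r1 : `|r| < 1.
  rewrite /r (@d_sub_small R V mul HB _ _ _ hab).
  apply: (le_lt_trans (ler_normB _ _)).
  apply: (le_lt_trans (lerD (lexx _) (ba_normM HB _ _))).
  rewrite -{1}[`|j - a|]mulr1 -mulrDr mulrC.
  by rewrite -ltr_pdivlMl ?ltr_wpDr // mulr1 -/e distrC.
have [r' hr'] := @qinv_small R V mul HB r r1.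
have hr : qdiamond mul r r' = 0 by [].
set t := qdiamond mul b r'.
have jt : qdiamond mul j t = 0 by rewrite /t -dA' hr.
have Jt : J t.
  have -> : t = mul j t + (-1) *: j.
    move: jt; rewrite /qdiamond scaleN1r => /eqP.
    rewrite subr_eq add0r => /eqP <-.
    by rewrite addrAC subrr add0r.
  by apply: JD; [apply: JM | apply: JZ].
have tj := HJ j t Jj Jt jt.
set c := qdiamond mul r' j.
have bc : qdiamond mul b c = 0 by rewrite /c -dA' tj.
have ac : a = c by rewrite -(dx0' a) -bc -dA' hab d0x'.
by rewrite ac.
Qed.
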